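(* Let $X$ be a $d\times d$ positive semidefinite matrix with eigenvalue vector $\lambda\in\mathbb{R}^d_+$ and let $1\le j\le d$. Then $e_j(\lambda)\ge\exp(\Gamma_j(X))$. More precisely, if $\lambda_1\ge\dots\ge\lambda_d$ and $k$ is the unique integer with $0\le k\le j-1$ and $\lambda_k>\frac{1}{j-k}\sum_{i>k}\lambda_i\ge\lambda_{k+1}$ (with $\lambda_0=\infty$), then $\lambda$ is majorized by the vector $\mu$ with $\mu_i=\lambda_i$ for $i\le k$, $\mu_i=\frac{1}{j-k}\sum_{t>k}\lambda_t$ for $k<i\le j$, and $\mu_i=0$ for $i>j$, and $e_j(\lambda)\ge e_j(\mu)=\exp(\Gamma_j(X))$.
   Context: $e_j(x_1,\dots,x_d)\coloneqq\sum_{S\subseteq[d],|S|=j}\prod_{i\in S}x_i$ is the elementary symmetric polynomial of degree $j$. For $x,y\in\mathbb{R}^d_+$, $x$ is majorized by $y$ if $\sum_{i=1}^\ell x_{(i)}\le\sum_{i=1}^\ell y_{(i)}$ for all $1\le\ell\le d-1$ and $\sum_{i=1}^d x_{(i)}=\sum_{i=1}^d y_{(i)}$, where $x_{(i)}$ is the $i$-th largest coordinate. For $x\in\mathbb{R}^d_+$, with $k$ the unique integer in $\{0,\dots,j-1\}$ such that $x_{(k)}>\frac{1}{j-k}\sum_{i>k}x_{(i)}\ge x_{(k+1)}$ ($x_{(0)}=\infty$), $\gamma_j(x)\coloneqq\sum_{i=1}^k\ln x_{(i)}+(j-k)\ln\big(\frac{1}{j-k}\sum_{i=k+1}^d x_{(i)}\big)$,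 with $\ln 0=-\infty$ and $\exp(-\infty)=0$; $\Gamma_j(X)\coloneqq\gamma_j(\lambda)$. *)

(* Defs.v *)
From HB Require Import structures.
From Stdlib Require Import Reals Lra.
From Stdlib Require Import Classical ClassicalEpsilon FunctionalExtensionality.
From mathcomp Require Import all_boot all_order all_algebra.
Set Implicit Arguments. Unset Strict Implicit. Unset Printing Implicit Defensive.

Definition Req_bool (x y : R) : bool := if Req_EM_T x y then true else false.
Lemma Req_boolP : Equality.axiom Req_bool.
Proof. move=> x y; rewrite /Req_bool; case: Req_EM_T => h; by constructor. Qed.
HB.instance Definition _ := hasDecEq.Build R Req_boolP.

Definition R_find (P : pred R) (n : nat) : option R :=
  match excluded_middle_informative (exists x, P x) with
  | left h => Some (proj1_sig (constructive_indefinite_description _ h))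
  | right _ => None
  end.
Lemma R_find_correct P n x : R_find P n = Some x -> P x.
Proof.
rewrite /R_find; case: excluded_middle_informative => // h [<-].
exact: (proj2_sig (constructive_indefinite_description _ h)).
Qed.
Lemma R_find_complete (P : pred R) : (exists x, P x) -> exists n, R_find P n.
Proof. by move=> h; exists 0%N; rewrite /R_find; case: excluded_middle_informative. Qed.
Lemma R_find_ext (P Q : pred R) : P =1 Q -> R_find P =1 R_find Q.
Proof. by move=> /functional_extensionality -> . Qed.
HB.instance Definition _ := hasChoice.Build R R_find_correct R_find_complete R_find_ext.

Lemma R_addrA : associative Rplus. Proof. move=> *; ring. Qed.
Lemma R_addrC : commutative Rplus. Proof. move=> *; ring. Qed.
Lemma R_add0r : left_id R0 Rplus. Proof. move=> *; ring. Qed.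
Lemma R_addNr : left_inverse R0 Ropp Rplus. Proof. move=> *; ring. Qed.
HB.instance Definition _ := GRing.isZmodule.Build R R_addrA R_addrC R_add0r R_addNr.

Lemma R_mulrA : associative Rmult. Proof. move=> *; ring. Qed.
Lemma R_mulrC : commutative Rmult. Proof. move=> *; ring. Qed.
Lemma R_mul1r : left_id R1 Rmult. Proof. move=> *; ring. Qed.
Lemma R_mulrDl : left_distributive Rmult Rplus. Proof. move=> *; ring. Qed.
Lemma R_oner_neq0 : R1 != R0.
Proof. by apply/negP => /Req_boolP; apply: R1_neq_R0. Qed.
HB.instance Definition _ :=
  GRing.Zmodule_isComNzRing.Build R R_mulrA R_mulrC R_mul1r R_mulrDl R_oner_neq0.

Definition R_inv (x : R) : R := if Req_EM_T x R0 then R0 else Rinv x.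
Lemma R_mulVf (x : R) : x != 0%R -> (R_inv x * x)%R = 1%R.
Proof.
move=> /negP hx; rewrite /R_inv; case: Req_EM_T => h.
  by exfalso; apply: hx; apply/Req_boolP.
by rewrite /GRing.mul /= Rinv_l.
Qed.
Lemma R_invr0 : R_inv 0%R = 0%R.
Proof. by rewrite /R_inv; case: Req_EM_T. Qed.
HB.instance Definition _ := GRing.ComNzRing_isField.Build R R_mulVf R_invr0.

Local Open Scope R_scope.

Definition psd (d : nat) (X : 'M[R]_d) : Prop :=
  trmx X = X /\ forall v : 'rV[R]_d, 0 <= ((v *m X *m trmx v)%R) ord0 ord0.

Definition eigvals (d : nat) (X : 'M[R]_d) (lam : 'I_d -> R) : Prop :=
  char_poly X = (\prod_(i < d) ('X - (lam i)%:P))%R.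

Definition elsym (d : nat) (j : nat) (x : 'I_d -> R) : R :=
  (\sum_(S : {set 'I_d} | #|S| == j) \prod_(i in S) x i)%R.

(* the coordinates listed as a sequence, and sorted nonincreasingly:
   x_(i) (1-indexed, as in the paper) is  nth 0 (dsort x) (i-1) *)
Definition vseq (d : nat) (x : 'I_d -> R) : seq R := [seq x i | i <- enum 'I_d].
Definition dsort (d : nat) (x : 'I_d -> R) : seq R :=
  sort (fun a b => if Rle_dec b a then true else false) (vseq x).

(* for a sequence s = (s_1,...,s_d) (1-indexed):  s_i = nth 0 s (i-1) *)
Definition tailsum (s : seq R) (k : nat) : R :=
  (\sum_(k <= i < size s) nth 0 s i)%R.                  (* = sum_{i>k} s_i *)
Definition tailavg (s : seq R) (j k : nat) : R :=
  tailsum s k / INR (j - k).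
(* the condition  s_k > (1/(j-k)) sum_{i>k} s_i >= s_{k+1},  with s_0 = +oo *)
Definition kcond (s : seq R) (j k : nat) : bool :=
  (if k is k'.+1 then (if Rlt_dec (tailavg s j k) (nth 0 s k') then true else false)
   else true) &&
  (if Rle_dec (nth 0 s k) (tailavg s j k) then true else false).

Definition kidx (d : nat) (j : nat) (x : 'I_d -> R) : nat :=
  find (kcond (dsort x) j) (iota 0 j).

(* extended reals  R U {-oo}, enough for ln with ln 0 = -oo *)
Inductive eR := EFin of R | ENInf.
Definition eadd (a b : eR) : eR :=
  match a, b with EFin x, EFin y => EFin (x + y) | _, _ => ENInf end.
Definition eln (a : R) : eR := if Rlt_dec 0 a then EFin (ln a) else ENInf.
Definition emul_nat (n : nat) (a : eR) : eR :=
  match a with EFin x => EFin (INR n * x) | ENInf => if n is 0 then EFin 0 else ENInf end.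
Definition eexp (a : eR) : R := match a with EFin x => exp x | ENInf => 0 end.

Definition gammaj (d : nat) (j : nat) (x : 'I_d -> R) : eR :=
  let s := dsort x in let k := kidx j x in
  eadd (foldr eadd (EFin 0) [seq eln (nth 0 s i) | i <- iota 0 k])
       (emul_nat (j - k) (eln (tailavg s j k))).

Definition majorized (d : nat) (x y : 'I_d -> R) : Prop :=
  (forall l : nat, (1 <= l <= d - 1)%N ->
     Rle (\sum_(0 <= i < l) nth 0 (dsort x) i)%R (\sum_(0 <= i < l) nth 0 (dsort y) i)%R) /\
  (\sum_(0 <= i < d) nth 0 (dsort x) i)%R = (\sum_(0 <= i < d) nth 0 (dsort y) i)%R.

(* Main.v *)
Require Import Defs.
From HB Require Import structures.
From Stdlib Require Import Reals Lra Lia Classical.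
From mathcomp Require Import all_boot all_order all_algebra.
From mathcomp Require Import zify.
Set Implicit Arguments. Unset Strict Implicit. Unset Printing Implicit Defensive.
Import GRing.Theory.
Lemma RaddE (x y : R) : (x + y)%R = Rplus x y. Proof. by []. Qed.
Lemma RmulE (x y : R) : (x * y)%R = Rmult x y. Proof. by []. Qed.
Lemma RoppE (x : R) : (- x)%R = Ropp x. Proof. by []. Qed.
Lemma R0E : (0%R : R) = R0. Proof. by []. Qed.
Lemma R1E : (1%R : R) = R1. Proof. by []. Qed.
Lemma exprE (x : R) n : (x ^+ n)%R = pow x n.
Proof. elim: n => [|n IH] //; by rewrite exprS IH. Qed.
Lemma natE n : (n%:R : R)%R = INR n.
Proof. elim: n => [|n IH] //; rewrite -addn1 natrD IH plus_INR. by []. Qed.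
Local Open Scope R_scope.

Lemma sum_ge0 (I : Type) (r : seq I) (P : pred I) (F : I -> R) :
  (forall i, P i -> 0 <= F i) -> 0 <= (\sum_(i <- r | P i) F i)%R.
Proof.
move=> h; apply: (big_ind (fun x => 0 <= x)) => //; first by rewrite R0E; lra.
by move=> x y hx hy; rewrite RaddE; lra.
Qed.

Lemma prod_ge0 (I : Type) (r : seq I) (P : pred I) (F : I -> R) :
  (forall i, P i -> 0 <= F i) -> 0 <= (\prod_(i <- r | P i) F i)%R.
Proof.
move=> h; apply: (big_ind (fun x => 0 <= x)) => //; first by rewrite R1E; lra.
by move=> x y hx hy; rewrite RmulE; apply: Rmult_le_pos.
Qed.

Lemma sum_le (I : Type) (r : seq I) (P : pred I) (F G : I -> R) :
  (forall i, P i -> F i <= G i) -> (\sum_(i <- r | P i) F i)%R <= (\sum_(i <- r | P i) G i)%R.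
Proof.
move=> h; apply: (big_ind2 (fun x y => x <= y)) => //; first by lra.
by move=> x1 x2 y1 y2 hx hy; rewrite !RaddE; lra.
Qed.

Definition Qs (s : seq R) : {poly R} := (\prod_(a <- s) (1 + a%:P * 'X))%R.
Definition Es (s : seq R) (m : nat) : R := ((Qs s)`_m)%R.

Lemma Es_nil m : Es [::] m = if m is 0 then 1 else 0.
Proof. by rewrite /Es /Qs big_nil coef1; case: m. Qed.

Lemma Es_cons0 a s : Es (a :: s) 0 = Es s 0.
Proof.
rewrite /Es /Qs big_cons mulrDl mul1r coefD -mulrA coefCM coefXM /=.
by rewrite mulr0 addr0.
Qed.

Lemma Es_consS a s m : Es (a :: s) m.+1 = (Es s m.+1 + a * Es s m)%R.
Proof.
by rewrite /Es /Qs big_cons mulrDl mul1r coefD -mulrA coefCM coefXM /=.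
Qed.

Lemma Es0 s : Es s 0 = 1.
Proof. elim: s => [|a s IH]; by rewrite ?Es_nil ?Es_cons0. Qed.

Lemma Es_perm s t m : perm_eq s t -> Es s m = Es t m.
Proof. by move=> h; rewrite /Es /Qs (perm_big _ h). Qed.

Lemma Es_big s m : (size s < m)%N -> Es s m = 0.
Proof.
elim: s m => [|a s IH] [|m] //; rewrite ?Es_nil // Es_consS => h.
have h1 : (size s < m.+1)%N by apply: ltnW.
rewrite (IH m.+1 h1) (IH m h) RaddE RmulE; ring.
Qed.

Lemma Es_size s : Es s (size s) = (\prod_(a <- s) a)%R.
Proof.
elim: s => [|a s IH] /=; first by rewrite Es_nil big_nil.
by rewrite Es_consS IH Es_big // big_cons add0r.
Qed.

Lemma Es_cat0 s n m : Es (s ++ nseq n R0) m = Es s m.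
Proof.
rewrite /Es /Qs big_cat /=.
have -> : (\prod_(a <- nseq n R0) (1 + a%:P * 'X) = 1)%R; last by rewrite mulr1.
by elim: n => [|n IH]; rewrite ?big_nil //= big_cons IH -R0E mul0r addr0 mulr1.
Qed.


Lemma Es1 s : Es s 1 = (\sum_(a <- s) a)%R.
Proof.
elim: s => [|a s IH]; first by rewrite Es_nil big_nil.
by rewrite Es_consS IH Es0 big_cons mulr1 addrC.
Qed.

Definition nneg (s : seq R) := forall i, 0 <= nth 0 s i.
Lemma nonneg_cons a s : nneg (a :: s) -> 0 <= a /\ nneg s.
Proof. by move=> h; split; [apply: (h 0%N) | move=> i; apply: (h i.+1)]. Qed.

Lemma Es_ge0 s m : nneg s -> 0 <= Es s m.
Proof.
elim: s m => [|a s IH] m.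
  move=> _; rewrite Es_nil; case: m => [|m]; lra.
move=> /nonneg_cons [ha hs].
case: m => [|m]; first by rewrite Es_cons0; apply: IH.
rewrite Es_consS RaddE RmulE.
have := IH m.+1 hs; have := IH m hs => h1 h2.
have := Rmult_le_pos _ _ ha h1; lra.
Qed.

Definition ssum (s : seq R) : R := (\sum_(a <- s) a)%R.
Lemma ssum_cons a s : ssum (a :: s) = a + ssum s.
Proof. by rewrite /ssum big_cons. Qed.
Lemma ssum_nil : ssum [::] = 0.
Proof. by rewrite /ssum big_nil. Qed.

Lemma Es_key A s : 0 <= A -> nneg s -> (forall i, nth 0 s i <= A) ->
  forall m t, 0 <= t <= A -> INR m * A + t <= ssum s ->
  t * A ^ m <= Es s m.+1.
Proof.
move=> hA; elim: s => [|a s IH] hs hsA m t ht hsum.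
  rewrite ssum_nil in hsum; rewrite Es_nil.
  have hm := pos_INR m; have : INR m * A >= 0 by nra.
  move=> ?; have -> : t = 0 by lra.
  lra.
have [ha0 hpos] := nonneg_cons hs.
have haA : a <= A by apply: (hsA 0%N).
have hsA' : forall i, nth 0 s i <= A by move=> i; apply: (hsA i.+1).
rewrite ssum_cons in hsum.
case: m hsum => [|m] hsum.
  rewrite Es1 -/(ssum (a :: s)) ssum_cons /=; simpl in hsum; lra.
rewrite Es_consS RaddE RmulE.
have hApow : 0 <= A ^ m by apply: pow_le.
rewrite S_INR Rmult_plus_distr_r Rmult_1_l in hsum.
case: (Rle_lt_dec a t) => hat.
  have h1 : (t - a) * A ^ m.+1 <= Es s m.+2.
    apply: IH => //; [lra | rewrite S_INR Rmult_plus_distr_r Rmult_1_l; lra].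
  have h2 : A * A ^ m <= Es s m.+1.
    apply: IH => //; lra.
  have h3 := Rmult_le_compat_l _ _ _ ha0 h2.
  simpl in h1 |- *; nra.
have h1 : (A + t - a) * A ^ m <= Es s m.+1.
  apply: IH => //; [lra | lra].
have h0 := Es_ge0 m.+2 hpos.
have h3 := Rmult_le_compat_l _ _ _ ha0 h1.
have h4 : t * A <= a * (A + t - a) by nra.
have h5 := Rmult_le_compat_r _ _ _ hApow h4.
simpl; nra.
Qed.

Definition sprod (s : seq R) : R := (\prod_(a <- s) a)%R.
Lemma sprod_cons a s : sprod (a :: s) = a * sprod s.
Proof. by rewrite /sprod big_cons. Qed.
Lemma sprod_nil : sprod [::] = 1.
Proof. by rewrite /sprod big_nil. Qed.
Lemma sprod_cat p q : sprod (p ++ q) = sprod p * sprod q.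
Proof. by rewrite /sprod big_cat. Qed.
Lemma sprod_nseq n A : sprod (nseq n A) = A ^ n.
Proof. by elim: n => [|n IH]; rewrite ?sprod_nil //= sprod_cons IH. Qed.
Lemma Es_size' s : Es s (size s) = sprod s.
Proof. exact: Es_size. Qed.

Lemma Es_cat_ge p q j : nneg (p ++ q) -> (size p <= j)%N ->
  sprod p * Es q (j - size p) <= Es (p ++ q) j.
Proof.
elim: p j => [|a p IH] j h hj.
  by rewrite sprod_nil subn0 /=; lra.
case: j hj => [|j] // hj.
rewrite cat_cons in h *.
have [ha h'] := nonneg_cons h.
have -> : (j.+1 - size (a :: p) = j - size p)%N by [].
rewrite Es_consS RaddE RmulE sprod_cons.
have h1 := IH j h' hj.
have h2 := Es_ge0 j.+1 h'.
have h3 := Rmult_le_compat_l _ _ _ ha h1.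
rewrite Rmult_assoc; lra.
Qed.

Lemma tailsum_drop s k : tailsum s k = ssum (drop k s).
Proof.
rewrite /tailsum; elim: s k => [|a s IH] k.
  by rewrite /= big_geq // ssum_nil.
case: k => [|k].
  rewrite drop0 /= big_nat_recl // ssum_cons RaddE; congr Rplus.
  by rewrite (IH 0%N) drop0.
by rewrite /= big_add1 /= IH.
Qed.

Lemma eexp_eadd a b : eexp (eadd a b) = eexp a * eexp b.
Proof. case: a => [x|]; case: b => [y|] //=; rewrite ?exp_plus; lra. Qed.

Lemma eexp_eln x : 0 <= x -> eexp (eln x) = x.
Proof.
rewrite /eln; case: Rlt_dec => h hx /=; first by rewrite exp_ln.
lra.
Qed.

Lemma eexp_fold l : nneg l ->
  eexp (foldr eadd (EFin 0) (map eln l)) = sprod l.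
Proof.
elim: l => [|a l IH] h /=; first by rewrite sprod_nil exp_0.
have [ha hl] := nonneg_cons h.
by rewrite eexp_eadd eexp_eln ?IH ?sprod_cons.
Qed.

Lemma eexp_emul n x : 0 <= x -> eexp (emul_nat n (eln x)) = x ^ n.
Proof.
rewrite /eln; case: Rlt_dec => h hx /=.
  by rewrite -Rpower_pow // /Rpower.
case: n => [|n] /=; first by rewrite exp_0.
have -> : x = 0 by lra.
by rewrite Rmult_0_l.
Qed.

Lemma take_iota s k : (k <= size s)%N -> take k s = [seq nth 0 s i | i <- iota 0 k].
Proof.
move=> hk; apply: (@eq_from_nth _ 0).
  by rewrite size_take size_map size_iota; case: ltngtP hk => // ->.
move=> i; rewrite size_take => hi.
have hik : (i < k)%N by move: hi hk; case: (ltnP k (size s)) => h1 h2 h3; lia.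
by rewrite nth_take // (nth_map 0%N) ?size_iota // nth_iota.
Qed.

Lemma le_div a b c : 0 < b -> (a / b <= c <-> a <= c * b).
Proof.
move=> hb; have e : a = (a / b) * b by field; lra.
split => h.
  rewrite e; apply: Rmult_le_compat_r; lra.
have : (a / b) * b <= c * b by rewrite -e.
move=> h2; apply: (Rmult_le_reg_r b) => //.
Qed.

Lemma lt_div a b c : 0 < b -> (a / b < c <-> a < c * b).
Proof.
move=> hb; have e : a = (a / b) * b by field; lra.
split => h.
  rewrite e; apply: Rmult_lt_compat_r; lra.
have : (a / b) * b < c * b by rewrite -e.
move=> h2; apply: (Rmult_lt_reg_r b) => //.
Qed.

Lemma ge_div a b c : 0 < b -> (c <= a / b <-> c * b <= a).
Proof.
move=> hb; split => h.
  by apply/Rnot_lt_le => h2; have := proj2 (lt_div a c hb) h2; lra.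
by apply/Rnot_lt_le => h2; have := proj1 (lt_div a c hb) h2; lra.
Qed.

Lemma gt_div a b c : 0 < b -> (c < a / b <-> c * b < a).
Proof.
move=> hb; split => h.
  by apply/Rnot_le_lt => h2; have := proj2 (le_div a c hb) h2; lra.
by apply/Rnot_le_lt => h2; have := proj1 (le_div a c hb) h2; lra.
Qed.

Lemma avg_le x T1 n : 0 < n -> (x <= (x + T1) / (n + 1) <-> x <= T1 / n).
Proof.
move=> hn; rewrite ge_div; last lra.
rewrite ge_div //; lra.
Qed.

Lemma avg_lt x T1 n : 0 < n -> ((x + T1) / (n + 1) < x <-> T1 / n < x).
Proof.
move=> hn; rewrite lt_div; last lra.
rewrite lt_div //; lra.
Qed.

Lemma ssum_ge0 s : nneg s -> 0 <= ssum s.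
Proof.
elim: s => [|a s IH] h; first by rewrite ssum_nil; lra.
have [ha hs] := nonneg_cons h; rewrite ssum_cons; have := IH hs; lra.
Qed.

Lemma nonneg_drop s k : nneg s -> nneg (drop k s).
Proof.
move=> h i; case: (ltnP i (size (drop k s))) => hi.
  by rewrite nth_drop; apply: h.
by rewrite nth_default //; lra.
Qed.

Lemma tailsum_ge0 s k : nneg s -> 0 <= tailsum s k.
Proof. by move=> h; rewrite tailsum_drop; apply/ssum_ge0/nonneg_drop. Qed.

Lemma tailsum_step s k : (k < size s)%N -> tailsum s k = nth 0 s k + tailsum s k.+1.
Proof. by move=> hk; rewrite !tailsum_drop (drop_nth 0 hk) ssum_cons. Qed.

Lemma INR_pos n : (0 < n)%N -> 0 < INR n.
Proof. by case: n => // n _; rewrite S_INR; have := pos_INR n; lra. Qed.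

Lemma INR_sub1 j m : (m < j)%N -> INR (j - m) = INR (j - m.+1) + 1.
Proof. by move=> h; rewrite -S_INR subnSK. Qed.

Definition sortedR (s : seq R) := forall i i', (i <= i')%N -> (i' < size s)%N ->
  nth 0 s i' <= nth 0 s i.

Lemma kcondE s j k : kcond s j k =
  ((if k is k'.+1 then (if Rlt_dec (tailavg s j k) (nth 0 s k') then true else false)
   else true) &&
  (if Rle_dec (nth 0 s k) (tailavg s j k) then true else false)).
Proof. by []. Qed.

Lemma kcond2 s j k : kcond s j k -> nth 0 s k <= tailavg s j k.
Proof. by rewrite kcondE => /andP [_]; case: Rle_dec. Qed.

Lemma kcond1 s j k : kcond s j k.+1 -> tailavg s j k.+1 < nth 0 s k.
Proof. by rewrite kcondE => /andP [+ _]; case: Rlt_dec. Qed.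

Lemma prop_step s j m : (m.+1 < j)%N -> (j <= size s)%N ->
  nth 0 s m <= tailavg s j m -> nth 0 s m <= tailavg s j m.+1.
Proof.
move=> hm hj; rewrite /tailavg (tailsum_step (k := m)); last lia.
rewrite (INR_sub1 (m := m)); last lia.
by apply: (proj1 (avg_le _ _ (INR_pos (n := (j - m.+1)%N) ltac:(lia)))). 
Qed.

Lemma kcond_unique s j k1 k2 : sortedR s -> (j <= size s)%N ->
  kcond s j k1 -> kcond s j k2 -> (k2 < j)%N -> (k1 <= k2)%N -> k1 = k2.
Proof.
move=> hs hj h1 h2 hk2; rewrite leq_eqVlt => /orP [/eqP //|hlt]; exfalso.
have key : forall n, (k1 + n < k2)%N -> nth 0 s (k1 + n) <= tailavg s j (k1 + n).+1.
  elim=> [|n IH] hn.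
    rewrite addn0 in hn *; apply: prop_step; [lia|lia|exact: kcond2].
  apply: prop_step; [lia|lia|].
  have := IH ltac:(lia); have := hs (k1 + n)%N (k1 + n.+1)%N ltac:(lia) ltac:(lia).
  rewrite addnS; lra.
case: k2 h2 hk2 hlt key => [|k2] // h2 hk2 hlt key.
have := key (k2 - k1)%N ltac:(lia).
have -> : (k1 + (k2 - k1))%N = k2 by lia.
have := kcond1 h2; lra.
Qed.

Lemma kcond_has s j : sortedR s -> nneg s -> (1 <= j)%N -> (j <= size s)%N ->
  has (kcond s j) (iota 0 j).
Proof.
move=> hs hn hj1 hj.
pose c k := if Rle_dec (nth 0 s k) (tailavg s j k) then true else false.
have hc : has c (iota 0 j).
  apply/hasP; exists (j.-1); first by rewrite mem_iota; lia.
  rewrite /c; case: Rle_dec => // [] [].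
  rewrite /tailavg (tailsum_step (k := j.-1)); last lia.
  have -> : (j - j.-1)%N = 1%N by lia.
  have -> : j.-1.+1 = j by lia.
  have := tailsum_ge0 j hn; rewrite /= Rdiv_1_r; lra.
set k0 := find c (iota 0 j).
have hk0 : (k0 < j)%N by rewrite -[X in (_ < X)%N](size_iota 0 j) -has_find.
have hck0 : c k0 by have := nth_find 0%N hc; rewrite nth_iota.
apply/hasP; exists k0; first by rewrite mem_iota; lia.
rewrite kcondE; apply/andP; split; last by move: hck0; rewrite /c; case: Rle_dec.
case E: k0 hk0 hck0 => [|k'] // hk0 hck0.
have hb : ~~ c k'.
  have := before_find 0%N (s := iota 0 j) (a := c) (i := k'); rewrite -/k0 E nth_iota; last lia.
  by move=> ->.
case: Rlt_dec => // [] [].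
move: hb; rewrite /c; case: Rle_dec => // hnle _.
have hlt : tailavg s j k' < nth 0 s k' by lra.
move: hlt; rewrite /tailavg (tailsum_step (k := k')); last lia.
rewrite (INR_sub1 (m := k')); last lia.
by apply: (proj1 (avg_lt _ _ (INR_pos (n := (j - k'.+1)%N) ltac:(lia)))).
Qed.

Lemma find_kcond s j : sortedR s -> nneg s -> (1 <= j)%N -> (j <= size s)%N ->
  (find (kcond s j) (iota 0 j) < j)%N /\ kcond s j (find (kcond s j) (iota 0 j)).
Proof.
move=> hs hn hj1 hj; have h := kcond_has hs hn hj1 hj.
split; first by rewrite -[X in (_ < X)%N](size_iota 0 j) -has_find.
have := nth_find 0%N h; rewrite nth_iota //.
by rewrite -[X in (_ < X)%N](size_iota 0 j) -has_find.
Qed.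

Lemma find_kcond_eq s j k : sortedR s -> nneg s -> (1 <= j)%N -> (j <= size s)%N ->
  (k < j)%N -> kcond s j k -> find (kcond s j) (iota 0 j) = k.
Proof.
move=> hs hn hj1 hj hk hck; have [hf hcf] := find_kcond hs hn hj1 hj.
case: (leqP k (find (kcond s j) (iota 0 j))) => h.
  by apply/esym/(kcond_unique hs hj hck hcf).
by apply: (kcond_unique hs hj hcf hck) => //; apply: ltnW.
Qed.

Lemma nonneg_take s k : nneg s -> nneg (take k s).
Proof.
move=> h i; case: (ltnP i (size (take k s))) => hi.
  rewrite nth_take; first exact: h.
  by move: hi; rewrite size_take; case: (ltnP k (size s)) => ? ?; lia.
by rewrite nth_default //; lra.
Qed.

Lemma tailavg_ge0 s j k : nneg s -> (k < j)%N -> 0 <= tailavg s j k.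
Proof.
move=> hn hk; rewrite /tailavg; apply/ge_div; first by apply: INR_pos; lia.
by rewrite Rmult_0_l; apply: tailsum_ge0.
Qed.

Lemma tailsum_avg s j k : (k < j)%N -> tailsum s k = tailavg s j k * INR (j - k).
Proof.
move=> hk; rewrite /tailavg; field.
by have := INR_pos (n := (j - k)%N) ltac:(lia); lra.
Qed.

Lemma main_ineq s j k : sortedR s -> nneg s -> (k < j)%N -> (j <= size s)%N ->
  nth 0 s k <= tailavg s j k ->
  sprod (take k s) * (tailavg s j k) ^ (j - k) <= Es s j.
Proof.
move=> hs hn hk hj hkA.
set A := tailavg s j k.
have hA : 0 <= A by apply: tailavg_ge0.
have h1 := @Es_cat_ge (take k s) (drop k s) j.
rewrite cat_take_drop size_takel in h1; last lia.
have {}h1 := h1 hn ltac:(lia).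
have hp : 0 <= sprod (take k s).
  rewrite -Es_size'; apply: Es_ge0; exact: nonneg_take.
suff h2 : A ^ (j - k) <= Es (drop k s) (j - k).
  have := Rmult_le_compat_l _ _ _ hp h2; lra.
have -> : (j - k)%N = (j - k.+1).+1 by lia.
have -> : A ^ (j - k.+1).+1 = A * A ^ (j - k.+1) by [].
apply: Es_key => //; first exact: nonneg_drop.
- move=> i; case: (ltnP i (size (drop k s))) => hi.
    rewrite nth_drop; apply: Rle_trans hkA; apply: hs; first lia.
    by move: hi; rewrite size_drop; lia.
  by rewrite nth_default //; lra.
- lra.
- rewrite -tailsum_drop (tailsum_avg s hk) -/A.
  rewrite (INR_sub1 (m := k)) //; lra.
Qed.

Lemma gamma_val s j k : nneg s -> (k < j)%N -> (j <= size s)%N ->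
  eexp (eadd (foldr eadd (EFin 0) [seq eln (nth 0 s i) | i <- iota 0 k])
             (emul_nat (j - k) (eln (tailavg s j k))))
  = sprod (take k s) * tailavg s j k ^ (j - k).
Proof.
move=> hn hk hj.
have -> : [seq eln (nth 0 s i) | i <- iota 0 k] = map eln (take k s).
  by rewrite take_iota; [rewrite -map_comp | lia].
rewrite eexp_eadd eexp_fold; last exact: nonneg_take.
by rewrite eexp_emul //; apply: tailavg_ge0.
Qed.

Lemma eig_nonneg d (X : 'M[R]_d) lam : psd X -> eigvals X lam -> forall i, 0 <= lam i.
Proof.
move=> [_ hpsd] heig i.
have hr : root (char_poly X) (lam i).
  rewrite heig /root horner_prod (bigD1 i) //= hornerXsubC subrr mul0r.
  by apply/eqP.
move: hr; rewrite -eigenvalue_root_char => /eigenvalueP [v hv hv0].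
have := hpsd v; rewrite hv -scalemxAl mxE.
set S := ((v *m v^T) ord0 ord0)%R.
have hS : S = (\sum_k v ord0 k * v ord0 k)%R.
  by rewrite /S mxE; apply: eq_bigr => k _; rewrite mxE.
have [k hk] : exists k, v ord0 k <> 0.
  apply: NNPP => hn; move/eqP: hv0; apply; apply/matrixP => a b.
  rewrite ord1 mxE; apply: NNPP => h; apply: hn; exists b; exact: h.
have hSpos : 0 < S.
  rewrite hS (bigD1 k) //= RaddE RmulE.
  have : 0 <= (\sum_(k0 | k0 != k) v ord0 k0 * v ord0 k0)%R.
    by apply: sum_ge0 => k0 _; rewrite RmulE; apply: Rle_0_sqr.
  have := Rsqr_pos_lt _ hk; rewrite /Rsqr; exact: Rplus_lt_le_0_compat.
rewrite RmulE => h.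
apply: Rnot_lt_le => hl; have := Rmult_lt_compat_r _ _ _ hSpos hl; lra.
Qed.

Lemma elsymE d j (x : 'I_d -> R) : elsym j x = Es (vseq x) j.
Proof.
rewrite /Es /Qs /vseq big_map big_enum /=.
under eq_bigr => i _ do rewrite addrC.
rewrite bigA_distr coef_sum /elsym.
rewrite [LHS]big_mkcond; apply: eq_bigr => J _.
rewrite -big_mkcond /= big_split /= prodr_const -rmorph_prod /= coefCM coefXn.
by rewrite eq_sym; case: (_ == _); rewrite ?mulr1 ?mulr0.
Qed.

Definition relR (a b : R) : bool := if Rle_dec b a then true else false.
Lemma relR_trans : transitive relR.
Proof. move=> b a c; rewrite /relR; case: (Rle_dec b a) => h1 //; case: (Rle_dec c b) => h2 //; case: (Rle_dec c a) => h3 //; lra. Qed.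
Lemma relR_refl : reflexive relR.
Proof. move=> a; rewrite /relR; case: (Rle_dec a a) => h //; lra. Qed.
Lemma relR_total : total relR.
Proof. move=> a b; rewrite /relR; case: (Rle_dec b a) => h1 //; case: (Rle_dec a b) => h2 //; lra. Qed.

Lemma size_vseq d (x : 'I_d -> R) : size (vseq x) = d.
Proof. by rewrite /vseq size_map size_enum_ord. Qed.

Lemma nth_vseq d (x : 'I_d -> R) (i : 'I_d) : nth 0 (vseq x) i = x i.
Proof. by rewrite /vseq (nth_map i) ?size_enum_ord // nth_ord_enum. Qed.

Lemma size_dsort d (x : 'I_d -> R) : size (dsort x) = d.
Proof. by rewrite /dsort size_sort size_vseq. Qed.

Lemma perm_dsort d (x : 'I_d -> R) : perm_eq (dsort x) (vseq x).
Proof. by rewrite /dsort perm_sort. Qed.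

Lemma sortedR_of s : sorted relR s -> sortedR s.
Proof.
move=> hs i i' hii' hi'.
have := @sorted_leq_nth _ _ relR_trans relR_refl 0 s hs i i'.
rewrite !inE /relR => h; have := h ltac:(lia) hi' hii'.
by case: Rle_dec.
Qed.

Lemma sortedR_dsort d (x : 'I_d -> R) : sortedR (dsort x).
Proof. apply: sortedR_of; exact: sort_sorted relR_total _. Qed.

Lemma nonneg_vseq d (x : 'I_d -> R) : (forall i, 0 <= x i) -> nneg (vseq x).
Proof.
move=> h n; case: (ltnP n d) => hn.
  by have := nth_vseq x (Ordinal hn); rewrite /= => ->.
by rewrite nth_default ?size_vseq //; lra.
Qed.

Lemma nonneg_dsort d (x : 'I_d -> R) : (forall i, 0 <= x i) -> nneg (dsort x).
Proof.
move=> h n; case: (ltnP n (size (dsort x))) => hn; last by rewrite nth_default //; lra.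
have : nth 0 (dsort x) n \in vseq x by rewrite -(perm_mem (perm_dsort x)) mem_nth.
by case/mapP => i _ ->.
Qed.

Lemma dsort_sorted d (x : 'I_d -> R) :
  (forall i1 i2 : 'I_d, (i1 <= i2)%N -> x i2 <= x i1) -> dsort x = vseq x.
Proof.
move=> h; apply: sorted_sort; first exact: relR_trans.
apply/(sortedP 0) => n; rewrite size_vseq => hn.
have hn1 : (n < d)%N by lia.
have := nth_vseq x (Ordinal hn); have := nth_vseq x (Ordinal hn1); rewrite /= => -> ->.
rewrite /relR; case: Rle_dec => // [] []; apply: h => /=; lia.
Qed.

Lemma gammaj_val d j (lam : 'I_d -> R) : (forall i, 0 <= lam i) -> (1 <= j <= d)%N ->
  eexp (gammaj j lam) =
  sprod (take (kidx j lam) (dsort lam)) * tailavg (dsort lam) j (kidx j lam) ^ (j - kidx j lam).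
Proof.
move=> hl /andP [hj1 hj].
have hs : sortedR (dsort lam) := @sortedR_dsort _ lam; have hn := nonneg_dsort hl.
have hsz : (j <= size (dsort lam))%N by rewrite size_dsort.
have [hk _] := find_kcond hs hn hj1 hsz.
by rewrite /gammaj gamma_val.
Qed.

Lemma part1 d j (lam : 'I_d -> R) : (forall i, 0 <= lam i) -> (1 <= j <= d)%N ->
  eexp (gammaj j lam) <= elsym j lam.
Proof.
move=> hl hj; rewrite gammaj_val // elsymE -(Es_perm j (perm_dsort lam)).
move: hj => /andP [hj1 hj].
have hs : sortedR (dsort lam) := @sortedR_dsort _ lam; have hn := nonneg_dsort hl.
have hsz : (j <= size (dsort lam))%N by rewrite size_dsort.
have [hk hck] := find_kcond hs hn hj1 hsz.
apply: main_ineq => //; exact: kcond2.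
Qed.

Lemma part2 d j (lam : 'I_d -> R) : (forall i, 0 <= lam i) -> (1 <= j <= d)%N ->
  (forall i1 i2 : 'I_d, (i1 <= i2)%N -> Rle (lam i2) (lam i1)) ->
   forall k : nat, (k <= j - 1)%N -> kcond (vseq lam) j k ->
   let mu : 'I_d -> R := fun i =>
     if (i < k)%N then lam i
     else if (i < j)%N then tailavg (vseq lam) j k else R0 in
   majorized lam mu /\
   Rle (elsym j mu) (elsym j lam) /\
   elsym j mu = eexp (gammaj j lam).
Proof.
move=> hl /andP [hj1 hjd] hmono k hkj hck mu.
have hk : (k < j)%N by lia.
have hds := dsort_sorted hmono.
set s := vseq lam in hck hds *.
have hsz : size s = d by rewrite size_vseq.
have hs : sortedR s by rewrite -hds; exact: (@sortedR_dsort _ lam).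
have hn : nneg s by exact: nonneg_vseq.
set A := tailavg s j k.
have hA : 0 <= A by apply: tailavg_ge0.
have hkA : nth 0 s k <= A by apply: kcond2.
pose f n := if (n < k)%N then nth 0 s n else if (n < j)%N then A else R0.
have hnth : forall n, nth 0 (vseq mu) n = f n.
  move=> n; case: (ltnP n d) => hnd.
    have := nth_vseq mu (Ordinal hnd); rewrite /= => ->.
    by rewrite /mu /f /= -(nth_vseq lam (Ordinal hnd)).
  rewrite nth_default ?size_vseq // /f.
  by case: ltnP => h1; [lia | case: ltnP => h2 //; lia].
have hkid : kidx j lam = k.
  by rewrite /kidx hds; apply: find_kcond_eq => //; lia.
have hQ : eexp (gammaj j lam) = sprod (take k s) * A ^ (j - k).
  by rewrite gammaj_val ?hj1 //= hkid hds.
have hmu : elsym j mu = sprod (take k s) * A ^ (j - k).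
  have hseq : vseq mu = (take k s ++ nseq (j - k) A) ++ nseq (d - j) R0.
    apply: (@eq_from_nth _ 0).
      by rewrite size_vseq !size_cat size_takel ?size_nseq; lia.
    move=> n; rewrite size_vseq => hnd; rewrite hnth /f.
    rewrite nth_cat size_cat size_takel ?size_nseq; last lia.
    case: (ltnP n (k + (j - k))) => h1.
      rewrite nth_cat size_takel; last lia.
      case: (ltnP n k) => h2; first by rewrite nth_take.
      rewrite nth_nseq; have -> : (n - k < j - k)%N by lia.
      by have -> : (n < j)%N by lia.
    rewrite nth_nseq; have -> : (n - (k + (j - k)) < d - j)%N by lia.
    have -> : (n < k)%N = false by lia.
    by have -> : (n < j)%N = false by lia.
  rewrite elsymE hseq Es_cat0.
  have := Es_size' (take k s ++ nseq (j - k) A).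
  rewrite size_cat size_takel ?size_nseq; last lia.
  have -> : (k + (j - k))%N = j by lia.
  by move=> ->; rewrite sprod_cat sprod_nseq.
split; last first.
  split; last by rewrite hmu hQ.
  rewrite hmu elsymE -/s; apply: main_ineq => //; lia.
have hfmono : forall n n', (n <= n')%N -> (n' < d)%N -> f n' <= f n.
  move=> n n' hnn' hn'd; rewrite /f.
  case: (ltnP n' k) => h1.
    have -> : (n < k)%N by lia.
    by apply: hs => //; lia.
  case: (ltnP n k) => h2.
    have hsn : 0 <= nth 0 s n := hn n.
    case: (ltnP n' j) => h3; last lra.
    have e : k = k.-1.+1 by lia.
    have hc := hck; rewrite e in hc; have := kcond1 hc; rewrite -e -/A.
    have := hs n k.-1 ltac:(lia) ltac:(lia); lra.
  case: (ltnP n' j) => h3.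
    have -> : (n < j)%N by lia.
    lra.
  by case: (ltnP n j) => _; lra.
have hmumono : forall i1 i2 : 'I_d, (i1 <= i2)%N -> mu i2 <= mu i1.
  move=> i1 i2 hi; rewrite -!nth_vseq !hnth; apply: hfmono => //.
have hdmu := dsort_sorted hmumono.
rewrite /majorized hds hdmu.
have hconst : forall a b, (a <= b)%N -> (\sum_(a <= i < b) A)%R = A * INR (b - a).
  move=> a b _; rewrite big_const_nat; elim: (b - a)%N => [|m IH].
    by rewrite /= Rmult_0_r.
  transitivity (A + A * INR m); first by rewrite -IH.
  by rewrite S_INR Rmult_plus_distr_l Rmult_1_r Rplus_comm.
have claim1 : forall l, (l <= j)%N ->
    (\sum_(0 <= i < l) nth 0 s i)%R <= (\sum_(0 <= i < l) nth 0 (vseq mu) i)%R.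
  move=> l hl0; rewrite !big_seq; apply: sum_le => i; rewrite mem_index_iota => /andP [_ hi].
  rewrite hnth /f; case: (ltnP i k) => h1; first exact: Rle_refl.
  have -> : (i < j)%N by lia.
  by apply: Rle_trans hkA; apply: hs; lia.
have hsplit : forall a b c (F : nat -> R), (a <= b)%N -> (b <= c)%N ->
    (\sum_(a <= i < c) F i)%R = (\sum_(a <= i < b) F i)%R + (\sum_(b <= i < c) F i)%R.
  by move=> a b c F hab hbc; apply: big_cat_nat.
have claim2 : forall l, (j <= l)%N ->
    (\sum_(0 <= i < l) nth 0 (vseq mu) i)%R = (\sum_(0 <= i < d) nth 0 s i)%R.
  move=> l hl0.
  rewrite (hsplit _ j) //.
  have -> : (\sum_(j <= i < l) nth 0 (vseq mu) i)%R = 0%R.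
    rewrite big_seq big1 // => i; rewrite mem_index_iota => /andP [h1 _].
    rewrite hnth /f; have -> : (i < k)%N = false by lia.
    by have -> : (i < j)%N = false by lia.
  rewrite (hsplit _ k) //; last lia.
  have -> : (\sum_(k <= i < j) nth 0 (vseq mu) i)%R = (\sum_(k <= i < j) A)%R.
    rewrite !big_seq; apply: eq_bigr => i; rewrite mem_index_iota => /andP [h1 h2].
    rewrite hnth /f; have -> : (i < k)%N = false by lia.
    by have -> : (i < j)%N by lia.
  have -> : (\sum_(0 <= i < k) nth 0 (vseq mu) i)%R = (\sum_(0 <= i < k) nth 0 s i)%R.
    rewrite !big_seq; apply: eq_bigr => i; rewrite mem_index_iota => /andP [h1 h2].
    by rewrite hnth /f h2.
  rewrite (hconst k j) ?(ltnW hk) // -(tailsum_avg s hk) /tailsum hsz.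
  have e0 : forall x : R, Rplus x R0 = x by move=> x; rewrite Rplus_0_r.
  rewrite e0 [RHS](hsplit _ k) //; lia.
have claim3 : forall l, (l <= d)%N ->
    (\sum_(0 <= i < l) nth 0 s i)%R <= (\sum_(0 <= i < d) nth 0 s i)%R.
  move=> l hl0; rewrite [X in _ <= X](hsplit _ l) //.
  have : 0 <= (\sum_(l <= i < d) nth 0 s i)%R by apply: sum_ge0 => i _; apply: hn.
  move=> h; apply: Rle_trans (Rplus_le_compat_l _ _ _ h); rewrite Rplus_0_r; exact: Rle_refl.
split.
  move=> l /andP [hl1 hl2].
  case: (leqP l j) => hlj; first exact: claim1.
  rewrite claim2; last lia.
  apply: claim3; lia.
by rewrite claim2.
Qed.

Local Close Scope R_scope.
Unset Implicit Arguments.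
Set Strict Implicit.

Theorem mainTheorem10 (d : nat) (X : 'M[R]_d) (lam : 'I_d -> R) (j : nat) :
  psd X -> eigvals X lam -> (1 <= j <= d)%N ->
  Rle (eexp (gammaj j lam)) (elsym j lam) /\
  ((forall i1 i2 : 'I_d, (i1 <= i2)%N -> Rle (lam i2) (lam i1)) ->
   forall k : nat, (k <= j - 1)%N -> kcond (vseq lam) j k ->
   let mu : 'I_d -> R := fun i =>
     if (i < k)%N then lam i
     else if (i < j)%N then tailavg (vseq lam) j k else R0 in
   majorized lam mu /\
   Rle (elsym j mu) (elsym j lam) /\
   elsym j mu = eexp (gammaj j lam)).
Proof.
move=> hpsd heig hj.
have hl := eig_nonneg hpsd heig.
split; first exact: part1.
exact: part2.
Qed.
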